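(* In the binary setting with $R_p=\kappa(Q-d_h)$ and $0<\beta\le1$, the maximum of $U(s,\cdot)$ over $[0,Q-d_l]$ is attained at one of the endpoints: it is attained at $q_s=0$ if $$\lambda w(p)\big[(\kappa-\pi)(Q-d_l)\big]^\beta\ \ge\ w(1-p)\Big\{\big[(\pi-\kappa)Q+\kappa d_h-\pi d_l\big]^\beta-\big[\kappa(d_h-Q)\big]^\beta\Big\},$$ and at $q_s=Q-d_l$ otherwise.
   Context: Binary setting: $\kappa>0$, $0<d_l<Q<d_h$, $0<p<1$; the demand equals $d_h$ with probability $p$ and $d_l$ with probability $1-p$. $L(y)=0$ if $y\ge0$, $L(y)=\kappa y$ if $y<0$. Value function $v(x)=x^\beta$ for $x\ge0$, $v(x)=-\lambda(-x)^\beta$ for $x<0$, with $\lambda\ge1$. Weighting $w(q)=\exp(-(-\ln q)^\mu)$, $0<\mu\le1$. Price $\pi=\pi_b^{\max}\in(0,\kappa)$. Seller's utility $U(s,q_s)=w(1-p)\,v\big(\pi q_s+L(Q-q_s-d_l)-R_p\big)+w(p)\,v\big(\pi q_s+L(Q-q_s-d_h)-R_p\big)$ for $q_s\ge0$. *)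

(* Defs.v *)
From Stdlib Require Import Reals Lra.
Open Scope R_scope.

(* Real power x^b for x >= 0 (and b > 0): 0^b = 0, otherwise Rpower.
   (Stdlib's Rpower 0 b = exp (b * ln 0) is not 0, hence the case split.) *)
Definition rpow (x b : R) : R := if Rle_dec x 0 then 0 else Rpower x b.

Definition Lpen (kappa y : R) : R := if Rle_dec 0 y then 0 else kappa * y.

Definition vfun (beta lambda x : R) : R :=
  if Rle_dec 0 x then rpow x beta else - lambda * rpow (- x) beta.

Definition wfun (mu q : R) : R := exp (- Rpower (- ln q) mu).

Definition Useller (kappa Q dl dh p beta lambda mu pi Rp qs : R) : R :=
  wfun mu (1 - p) * vfun beta lambda (pi * qs + Lpen kappa (Q - qs - dl) - Rp)
  + wfun mu p * vfun beta lambda (pi * qs + Lpen kappa (Q - qs - dh) - Rp).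

(* Main.v *)
Require Import Defs.
From Stdlib Require Import Reals Lra Psatz.
Open Scope R_scope.

Lemma Rpower_neg_decr (x y e : R) : 0 < x -> x <= y -> e <= 0 -> Rpower y e <= Rpower x e.
Proof.
  intros Hx Hxy He. unfold Rpower.
  destruct (Rle_lt_or_eq_dec x y Hxy) as [Hl|Hq]; [|subst; lra].
  pose proof (ln_increasing x y Hx Hl).
  destruct (Rle_lt_or_eq_dec e 0 He) as [He'|He'].
  - apply Rlt_le, exp_increasing. nra.
  - subst. rewrite !Rmult_0_l. lra.
Qed.

Lemma h_decr (b v u : R) : 0 < b -> b <= 1 -> 0 < v -> v <= u ->
  Rpower (1+u) b - Rpower u b <= Rpower (1+v) b - Rpower v b.
Proof.
  intros Hb0 Hb1 Hv Hvu.
  destruct (Rle_lt_or_eq_dec v u Hvu) as [Hl|Hq]; [|subst; lra].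
  set (f := fun x => Rpower (1+x) b - Rpower x b).
  set (f' := fun x => b * Rpower (1+x) (b-1) * 1 - b * Rpower x (b-1)).
  destruct (MVT_cor2 f f' v u Hl) as [c [Hc1 Hc2]].
  { intros c Hc. unfold f, f'. apply derivable_pt_lim_minus.
    - apply (derivable_pt_lim_comp (fun x => 1 + x) (fun x => Rpower x b)).
      + pose proof (derivable_pt_lim_plus (fct_cte 1) id c 0 1 (derivable_pt_lim_const 1 c) (derivable_pt_lim_id c)) as HH.
        rewrite Rplus_0_l in HH. exact HH.
      + apply derivable_pt_lim_power. lra.
    - apply derivable_pt_lim_power. lra. }
  assert (f' c <= 0).
  { unfold f'. assert (Rpower (1+c) (b-1) <= Rpower c (b-1)).
    apply Rpower_neg_decr; lra. nra. }
  unfold f in Hc1. nra.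
Qed.

Lemma Rpower_pos' x b : 0 < Rpower x b.
Proof. unfold Rpower. apply exp_pos. Qed.

Lemma keyA (b P c t : R) : 0 < b -> b <= 1 -> 0 < P -> 0 < c -> 0 < t -> t <= 1 ->
  Rpower (t*P + c) b - Rpower c b <= Rpower t b * (Rpower (P+c) b - Rpower c b).
Proof.
  intros Hb0 Hb1 HP Hc Ht Ht1.
  set (x := t*P).
  assert (Hx : 0 < x) by (unfold x; nra).
  assert (E1 : forall y, 0 < y -> Rpower (y + c) b = Rpower y b * Rpower (1 + c/y) b).
  { intros y Hy. rewrite Rpower_mult_distr; [|lra|]. f_equal. field. lra.
    assert (0 < c/y) by (apply Rdiv_lt_0_compat; lra). lra. }
  assert (E2 : forall y, 0 < y -> Rpower c b = Rpower y b * Rpower (c/y) b).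
  { intros y Hy. rewrite Rpower_mult_distr; [|lra|apply Rdiv_lt_0_compat; lra]. f_equal. field. lra. }
  assert (E3 : Rpower x b = Rpower t b * Rpower P b).
  { unfold x. rewrite Rpower_mult_distr; lra. }
  rewrite (E1 x Hx), (E1 P HP).
  rewrite (E2 x Hx) at 1. rewrite (E2 P HP).
  rewrite E3.
  assert (H : Rpower (1 + c/x) b - Rpower (c/x) b <= Rpower (1 + c/P) b - Rpower (c/P) b).
  { apply h_decr; try lra. apply Rdiv_lt_0_compat; lra.
    unfold Rdiv. apply Rmult_le_compat_l; [lra|]. apply Rinv_le_contravar; [lra|].
    unfold x. nra. }
  pose proof (Rpower_pos' t b). pose proof (Rpower_pos' P b).
  assert (0 < Rpower t b * Rpower P b) by nra.
  nra.
Qed.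

Lemma rpow_pos x b : 0 < x -> rpow x b = Rpower x b.
Proof. intros H. unfold rpow. destruct (Rle_dec x 0); lra. Qed.
Lemma rpow_0 b : rpow 0 b = 0.
Proof. unfold rpow. destruct (Rle_dec 0 0); lra. Qed.
Lemma vpos b l x : 0 <= x -> vfun b l x = rpow x b.
Proof. intros H. unfold vfun. destruct (Rle_dec 0 x); lra. Qed.
Lemma vneg b l x : x <= 0 -> vfun b l x = - l * rpow (-x) b.
Proof. intros H. unfold vfun. destruct (Rle_dec 0 x).
  - assert (x = 0) by lra. subst. rewrite Ropp_0, rpow_0. ring.
  - reflexivity. Qed.
Lemma Lpos k y : 0 <= y -> Lpen k y = 0.
Proof. intros H. unfold Lpen. destruct (Rle_dec 0 y); lra. Qed.
Lemma Lneg k y : y < 0 -> Lpen k y = k * y.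
Proof. intros H. unfold Lpen. destruct (Rle_dec 0 y); lra. Qed.

Theorem mainTheorem6
  (kappa Q dl dh p beta lambda mu pi : R)
  (Hkappa : 0 < kappa) (Hdl : 0 < dl) (HdlQ : dl < Q) (HQdh : Q < dh)
  (Hp0 : 0 < p) (Hp1 : p < 1)
  (Hbeta0 : 0 < beta) (Hbeta1 : beta <= 1)
  (Hlambda : 1 <= lambda)
  (Hmu0 : 0 < mu) (Hmu1 : mu <= 1)
  (Hpi0 : 0 < pi) (Hpik : pi < kappa) :
  let Rp := kappa * (Q - dh) in
  let U := Useller kappa Q dl dh p beta lambda mu pi Rp in
  let cond :=
    lambda * wfun mu p * rpow ((kappa - pi) * (Q - dl)) beta >=
    wfun mu (1 - p) *
      (rpow ((pi - kappa) * Q + kappa * dh - pi * dl) beta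
       - rpow (kappa * (dh - Q)) beta) in
  (cond -> forall qs, 0 <= qs <= Q - dl -> U qs <= U 0) /\
  (~ cond -> forall qs, 0 <= qs <= Q - dl -> U qs <= U (Q - dl)).
Proof.
  intros Rp U cond.
  set (M := Q - dl). set (c := kappa * (dh - Q)).
  set (w1 := wfun mu (1 - p)). set (w2 := wfun mu p).
  assert (Hw1 : 0 < w1) by (unfold w1, wfun; apply exp_pos).
  assert (Hw2 : 0 < w2) by (unfold w2, wfun; apply exp_pos).
  assert (HM : 0 < M) by (unfold M; lra).
  assert (Hc : 0 < c) by (unfold c; nra).
  assert (Uf : forall q, 0 <= q <= M ->
    U q = w1 * rpow (pi*q + c) beta - w2 * lambda * rpow ((kappa-pi)*q) beta).
  { intros q Hq. unfold U, Useller. fold w1 w2.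
    rewrite (Lpos kappa (Q - q - dl)) by (unfold M in Hq; lra).
    rewrite (Lneg kappa (Q - q - dh)) by (unfold M in Hq; lra).
    rewrite vpos by (unfold Rp, c in *; nra).
    rewrite vneg by (unfold Rp; nra).
    replace (pi * q + 0 - Rp) with (pi*q + c) by (unfold Rp, c; ring).
    replace (- (pi * q + kappa * (Q - q - dh) - Rp)) with ((kappa-pi)*q) by (unfold Rp; ring).
    ring. }
  assert (U0 : U 0 = w1 * Rpower c beta).
  { rewrite Uf by lra. replace ((kappa-pi)*0) with 0 by ring. replace (pi*0+c) with c by ring. rewrite rpow_0, rpow_pos by lra. ring. }
  assert (UM : U M = w1 * Rpower (pi*M + c) beta - w2 * lambda * Rpower ((kappa-pi)*M) beta).
  { rewrite Uf by lra. rewrite !rpow_pos by nra. ring. }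
  assert (Hcond : cond <-> U M <= U 0).
  { unfold cond. rewrite U0, UM.
    replace ((pi - kappa) * Q + kappa * dh - pi * dl) with (pi*M + c) by (unfold M, c; ring).
    fold c w1 w2. rewrite !rpow_pos by nra. fold M. split; intro; nra. }
  assert (Key : forall q, 0 <= q <= M -> exists s, 0 <= s <= 1 /\
            U q <= (1 - s) * U 0 + s * U M).
  { intros q Hq. destruct (Rle_lt_or_eq_dec 0 q (proj1 Hq)) as [Hq0|Hq0].
    2:{ subst q. exists 0. split; [lra|]. lra. }
    set (t := q / M).
    assert (Ht0 : 0 < t) by (unfold t; apply Rdiv_lt_0_compat; lra).
    assert (Ht1 : t <= 1) by (unfold t; apply (Rmult_le_reg_r M); [lra|]; unfold Rdiv; rewrite Rmult_assoc, Rinv_l by lra; lra).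
    assert (Hq' : q = t * M) by (unfold t; field; lra).
    exists (Rpower t beta). split.
    { split. pose proof (Rpower_pos' t beta); lra.
      replace 1 with (Rpower 1 beta). apply Rle_Rpower_l; lra.
      unfold Rpower. rewrite ln_1, Rmult_0_r. apply exp_0. }
    rewrite Uf by lra. rewrite !rpow_pos by nra. rewrite U0, UM.
    assert (A := keyA beta (pi*M) c t Hbeta0 Hbeta1 ltac:(nra) Hc Ht0 Ht1).
    replace (pi*q) with (t*(pi*M)) by (rewrite Hq'; ring).
    replace ((kappa-pi)*q) with (t*((kappa-pi)*M)) by (rewrite Hq'; ring).
    rewrite <- Rpower_mult_distr by nra.
    replace (pi*M+c) with (pi*M+c) in A by ring.
    set (s := Rpower t beta) in *.
    assert (w1 * (Rpower (t * (pi * M) + c) beta - Rpower c beta) <= w1 * (s * (Rpower (pi * M + c) beta - Rpower c beta))) by (apply Rmult_le_compat_l; lra).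
    nra. }
  split.
  - intros Hc' qs Hqs. destruct (Key qs Hqs) as [s [Hs H]]. apply Hcond in Hc'. nra.
  - intros Hc' qs Hqs. destruct (Key qs Hqs) as [s [Hs H]].
    assert (U 0 < U M) by (destruct (Rlt_or_le (U 0) (U M)); [lra|exfalso; apply Hc', Hcond; lra]).
    fold M. nra.
Qed.
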